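(* Let $p$ be an odd prime. Let $\mathcal{L}=(L_1,\dots,L_m)$ be a square-independent system of linear forms in $d$ variables over $\mathbb{F}_p$ and let $\Gamma_2=(q_1,\dots,q_{d_2})$ be a quadratic map from $\mathbb{F}_p^n$ to $\mathbb{F}_p^{d_2}$ of rank at least $r$. Let $\phi_1,\dots,\phi_m$ be linear maps from $(\mathbb{F}_p^n)^d$ to $\mathbb{F}_p^{d_2}$ and let $b_1,\dots,b_m\in\mathbb{F}_p^{d_2}$. Let $\mathbf{x}=(x_1,\dots,x_d)$ be chosen uniformly at random from $(\mathbb{F}_p^n)^d$. Then the probability that $\Gamma_2(L_i(\mathbf{x}))=\phi_i(\mathbf{x})+b_i$ for every $i=1,\dots,m$ differs from $p^{-md_2}$ by at most $p^{-r/2}$.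
   Context: A linear form in $d$ variables is $L(x_1,\dots,x_d)=\sum_{r=1}^d\gamma_rx_r$ with $\gamma_r\in\mathbb{F}_p$; for $\mathbf{x}\in(\mathbb{F}_p^n)^d$, $L(\mathbf{x})=\sum_r\gamma_rx_r\in\mathbb{F}_p^n$. A system $(L_1,\dots,L_m)$ with $L_i=\sum_r\gamma^{(i)}_rx_r$ is square-independent if the $d\times d$ matrices $(\gamma^{(i)}_r\gamma^{(i)}_s)_{r,s}$, $i=1,\dots,m$, are linearly independent over $\mathbb{F}_p$. A quadratic form on $\mathbb{F}_p^n$ is $q(x)=x^TMx$ with $M$ a symmetric matrix over $\mathbb{F}_p$; its associated symmetric bilinear form is $\beta(x,y)=(q(x+y)-q(x)-q(y))/2$. A quadratic map $\Gamma_2:\mathbb{F}_p^n\to\mathbb{F}_p^{d_2}$ is $x\mapsto(q_1(x),\dots,q_{d_2}(x))$ with $q_j$ quadratic forms; it has rank at least $r$ if, with $\beta_j$ the bilinear form of $q_j$, the bilinear form $\sum_j\lambda_j\beta_j$ has rank at least $r$ for every $(\lambda_1,\dots,\lambda_{d_2})\in\mathbb{F}_p^{d_2}\setminus\{0\}$. *)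

(* Defs.v *)
From HB Require Import structures.
From mathcomp Require Import all_boot all_order all_algebra.
Set Implicit Arguments. Unset Strict Implicit. Unset Printing Implicit Defensive.
Import Order.TTheory GRing.Theory Num.Theory.
Local Open Scope ring_scope.

Section Defs.
Variable F : fieldType.

(* A linear form L = sum_r gamma_r x_r in d variables, given by its
   coefficient row vector gamma : 'rV_d.  A point x = (x_1,...,x_d) of
   (F^n)^d is a d x n matrix whose r-th row is x_r; then
   L(x) = sum_r gamma_r x_r = gamma *m x. *)
Definition lin_form_eval (d n : nat) (gamma : 'rV[F]_d) (x : 'M[F]_(d, n))
  : 'rV[F]_n := gamma *m x.

Definition sq_mx (d : nat) (gamma : 'rV[F]_d) : 'M[F]_d :=
  \matrix_(r, s) (gamma 0 r * gamma 0 s).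

Definition square_independent (m d : nat) (gamma : 'I_m -> 'rV[F]_d) : Prop :=
  forall c : 'I_m -> F,
    \sum_(i < m) c i *: sq_mx (gamma i) = 0 -> forall i, c i = 0.

Definition qform (n : nat) (M : 'M[F]_n) (x : 'rV[F]_n) : F :=
  (x *m M *m x^T) 0 0.

Definition assoc_bilin (n : nat) (q : 'rV[F]_n -> F) (x y : 'rV[F]_n) : F :=
  (q (x + y) - q x - q y) / 2%:R.

Definition bilin_rank (n : nat) (B : 'rV[F]_n -> 'rV[F]_n -> F) : nat :=
  \rank (\matrix_(a, b) B (delta_mx 0 a) (delta_mx 0 b)).

(* Quadratic map Gamma_2 = (q_1,...,q_{d2}), q_j given by symmetric M_j. *)
Definition quad_map (n d2 : nat) (M : 'I_d2 -> 'M[F]_n) (x : 'rV[F]_n)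
  : 'rV[F]_d2 := \row_j qform (M j) x.

Definition lin_comb_bilin (n d2 : nat) (M : 'I_d2 -> 'M[F]_n)
  (lambda : 'rV[F]_d2) (x y : 'rV[F]_n) : F :=
  \sum_(j < d2) lambda 0 j * assoc_bilin (qform (M j)) x y.

Definition quad_map_rank_ge (n d2 : nat) (M : 'I_d2 -> 'M[F]_n) (r : nat)
  : Prop :=
  forall lambda : 'rV[F]_d2, lambda != 0 ->
    (r <= bilin_rank (lin_comb_bilin M lambda))%N.

End Defs.

(* Main.v *)
Require Import Defs.
From HB Require Import structures.
From mathcomp Require Import all_boot all_order all_algebra.
Import Order.TTheory GRing.Theory Num.Theory.
Local Open Scope ring_scope.

From mathcomp Require mxabelem.
From mathcomp Require Import ring zify lra.

Lemma mx11_entry (F : fieldType) (A : 'M[F]_1) : A = (A 0 0)%:M.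
Proof. exact: mx11_scalar. Qed.

Lemma tr11 (F : fieldType) (B : 'M[F]_1) : B^T = B.
Proof. by apply/matrixP => i j; rewrite !ord1 mxE. Qed.

Lemma qform_add (F : fieldType) n (A : 'M[F]_n) (HA : A^T = A) (x y : 'rV[F]_n) :
  qform A (x + y) = qform A x + qform A y + (x *m A *m y^T) 0 0 *+ 2.
Proof.
have H : y *m A *m x^T = x *m A *m y^T.
  by rewrite -[LHS]tr11 !trmx_mul HA trmxK mulmxA.
rewrite /qform linearD /= !mulmxDl !mulmxDr H.
set a := x *m A *m x^T; set b := x *m A *m y^T; set c := y *m A *m y^T.
by rewrite !mxE mulr2n; ring.
Qed.

Lemma delta_form (F : fieldType) n (A : 'M[F]_n) a b :
  ((delta_mx 0 a : 'rV[F]_n) *m A *m (delta_mx 0 b : 'rV[F]_n)^T) 0 0 = A a b.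
Proof. by rewrite -rowE trmx_delta -colE !mxE. Qed.

Section KerIm.
Variables (V V' : finZmodType) (f : V -> V').
Hypothesis fB : forall x y, f (x - y) = f x - f y.

Lemma fB0 : f 0 = 0.
Proof. by rewrite -(subrr (0 : V)) fB subrr. Qed.
Lemma fBN x : f (- x) = - f x.
Proof. by rewrite -sub0r fB fB0 sub0r. Qed.
Lemma fBD x y : f (x + y) = f x + f y.
Proof. by have := fB x (- y); rewrite opprK fBN opprK. Qed.

Lemma fiber_eq x0 : #|[set x | f x == f x0]| = #|[set x | f x == 0]|.
Proof.
suff ->: [set x | f x == f x0] = [set y + x0 | y in [set x | f x == 0]].
  by rewrite card_imset //; exact: addIr.
apply/setP => y; rewrite !inE.
apply/idP/imsetP.
  move=> /eqP fy; exists (y - x0); last by rewrite subrK.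
  by rewrite inE fB fy subrr.
by case=> x; rewrite inE => /eqP fx ->; rewrite fBD fx add0r.
Qed.

Lemma fiber_le a : (#|[set x | f x == a]| <= #|[set x | f x == 0%R]|)%N.
Proof.
case: (set_0Vmem [set x | f x == a]) => [->|[x0]]; first by rewrite cards0.
by rewrite inE => /eqP <-; rewrite fiber_eq.
Qed.

Lemma ker_im : #|V| = (#|[set x | f x == 0%R]| * #|[set f x | x : V]|)%N.
Proof.
transitivity (\sum_(x : V) 1)%N; first by rewrite sum1_card.
rewrite (partition_big f (mem [set f x | x : V])) /=; last first.
  by move=> i _; apply: imset_f.
rewrite mulnC -sum_nat_const; apply: eq_bigr => j /imsetP [x0 _ ->].
rewrite -(fiber_eq x0) sum1_card; by apply: eq_card => x; rewrite inE.
Qed.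
End KerIm.

Lemma fBMn (V V' : finZmodType) (f : V -> V') (fB : forall x y, f (x - y) = f x - f y) x k :
  f (x *+ k) = f x *+ k.
Proof. elim: k => [|k IH]; first by rewrite !mulr0n (fB0 _ _ _ fB). by rewrite !mulrS (fBD _ _ _ fB) IH. Qed.

Lemma functional_ker (p : nat) (Hp : prime p) (V : finZmodType) (g : V -> 'F_p)
  (gB : forall x y, g (x - y) = g x - g y) v0 : g v0 != 0 ->
  (#|[set x | g x == 0%R]| * p)%N = #|V|.
Proof.
move=> nz; rewrite (ker_im _ _ _ gB); congr (_ * _)%N.
suff ->: [set g x | x : V] = setT by rewrite cardsT card_Fp.
apply/setP => a; rewrite !inE.
apply/imsetP; exists (v0 *+ val (a / g v0)) => //.
by rewrite (fBMn _ _ _ gB) -mulr_natr natr_Zp mulrC divfK.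
Qed.

Section Main.
Variables (p : nat) (Hp : prime p) (Hodd : odd p) (m d n d2 r : nat)
  (gamma : 'I_m -> 'rV['F_p]_d) (M : 'I_d2 -> 'M['F_p]_n)
  (Hsym : forall j, (M j)^T = M j)
  (phi : 'I_m -> 'M['F_p]_(d, n) -> 'rV['F_p]_d2)
  (Hphi : forall i, linear (phi i)).

Local Notation K := 'F_p.
Local Notation V := 'M[K]_(d, n).
Local Notation W := 'M[K]_(m, d2).

Lemma two_nz : (2%:R : K) != 0.
Proof.
rewrite -(dvdn_pcharf (pchar_Fp Hp)); apply/negP => /dvdn_leq H.
have e : p = 2%N by apply/eqP; rewrite eqn_leq H // prime_gt1.
by move: Hodd; rewrite e.
Qed.

Lemma phiD i x y : phi i (x + y) = phi i x + phi i y.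
Proof. by have := Hphi i 1 x y; rewrite !scale1r. Qed.

Definition Fm (x : V) : W :=
  \matrix_(i, j) ((quad_map M (lin_form_eval (gamma i) x)) 0 j - (phi i x) 0 j).
Definition Bf (y h : V) : W :=
  \matrix_(i, j) ((gamma i *m y) *m M j *m (gamma i *m h)^T) 0 0.

Lemma Fm_shift y h : Fm (y + h) - Fm y = Fm h + Bf y h *+ 2.
Proof.
apply/matrixP => i j.
rewrite /Fm /Bf /quad_map /lin_form_eval !mxE mulmxDr qform_add // phiD !mxE.
ring.
Qed.

Lemma gram_eq (mu : 'rV[K]_d2) :
  bilin_rank (lin_comb_bilin M mu) = \rank ((\sum_j mu 0 j *: M j)%R).
Proof.
rewrite /bilin_rank; congr (\rank _); apply/matrixP => a b.
rewrite !mxE /lin_comb_bilin summxE; apply: eq_bigr => j _.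
have E : forall a0 b0 c : K, (a0 + b0 + c *+ 2 - a0 - b0) / 2%:R = c.
  move=> a0 b0 c; rewrite (_ : a0 + b0 + c *+ 2 - a0 - b0 = c * 2%:R); last by ring.
  by rewrite mulfK // two_nz.
by rewrite /assoc_bilin qform_add // delta_form mxE E.
Qed.


Lemma scaleE (a : K) k l (A : 'M[K]_(k, l)) i j : (a *: A) i j = a * A i j.
Proof. by rewrite mxE. Qed.

Lemma BfE y h i j : Bf y h i j = ((gamma i *m y) *m M j *m (gamma i *m h)^T) 0 0.
Proof. by rewrite !mxE. Qed.

Definition dot (l w : W) : K := \sum_i \sum_j l i j * w i j.
Definition Rset (l : W) : {set V} := [set h | [forall y, dot l (Bf y h) == 0]].

Section Rad.
Variables (l : W) (u : 'rV[K]_d).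

Definition cf i : K := (gamma i *m u^T) 0 0.
Definition muf j : K := \sum_i l i j * cf i ^+ 2.
Definition Pm : 'M[K]_n := \sum_j muf j *: M j.
Definition Psi (h : V) : 'rV[K]_n :=
  \sum_i \sum_j (l i j * cf i) *: (gamma i *m h *m M j).

Lemma PsiB h h' : Psi (h - h') = Psi h - Psi h'.
Proof.
rewrite /Psi -sumrB; apply: eq_bigr => i _; rewrite -sumrB; apply: eq_bigr => j _.
by rewrite mulmxBr mulmxBl scalerBr.
Qed.

Lemma gam_uz i (z : 'rV[K]_n) : gamma i *m (u^T *m z) = cf i *: z.
Proof. by rewrite mulmxA (mx11_scalar (gamma i *m u^T)) mul_scalar_mx. Qed.

Lemma dot_uz h (z : 'rV[K]_n) : dot l (Bf (u^T *m z) h) = (Psi h *m z^T) 0 0.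
Proof.
rewrite /dot /Psi mulmx_suml summxE; apply: eq_bigr => i _.
rewrite mulmx_suml summxE; apply: eq_bigr => j _.
rewrite BfE gam_uz -scalemxAl -scalemxAl -scalemxAl !scaleE mulrA.
congr (_ * _).
rewrite -[z *m M j *m (gamma i *m h)^T]tr11 !trmx_mul trmxK Hsym mulmxA.
by rewrite trmxK.
Qed.

Lemma Psi_R h : h \in Rset l -> Psi h = 0.
Proof.
rewrite inE => /forallP H; apply/matrixP => a k.
have := H (u^T *m delta_mx 0 k); rewrite dot_uz trmx_delta -colE !mxE => /eqP.
by rewrite (ord1 a).
Qed.

Lemma Psi_img (w : 'rV[K]_n) : Psi (u^T *m w) = w *m Pm.
Proof.
rewrite /Psi /Pm mulmx_sumr exchange_big /=; apply: eq_bigr => j _.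
rewrite /muf scaler_suml mulmx_sumr; apply: eq_bigr => i _.
by rewrite gam_uz -scalemxAl scalerA scalemxAr expr2 mulrA.
Qed.

Lemma R_card : (r <= \rank Pm)%N -> (#|Rset l| * p ^ r <= #|V|)%N.
Proof.
move=> HP.
have kerle : (#|Rset l| <= #|[set h | Psi h == 0%R]|)%N.
  by apply: subset_leq_card; apply/subsetP => h hR; rewrite inE Psi_R.
have imge : (#|mxabelem.rowg Pm| <= #|[set Psi h | h : V]|)%N.
  apply: subset_leq_card; apply/subsetP => w.
  rewrite mxabelem.mem_rowg => /submxP [D ->]; apply/imsetP.
  by exists (u^T *m D) => //; rewrite Psi_img.
rewrite (ker_im _ _ _ PsiB); apply: leq_mul => //.
apply: leq_trans imge; rewrite mxabelem.card_rowg card_Fp //.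
by apply: leq_pexp2l => //; exact: prime_gt0.
Qed.

End Rad.

Lemma exists_u (Hsq : square_independent gamma) (l : W) :
  l != 0 -> exists u : 'rV[K]_d, (\row_j muf l u j) != 0.
Proof.
move=> nzl.
have [i0 [j0 nz]] : exists i j, l i j != 0.
  case: (pickP (fun ij : 'I_m * 'I_d2 => l ij.1 ij.2 != 0)) => [[i j] /= H | H].
    by exists i, j.
  move/eqP: nzl; case; apply/matrixP => i j; have := H (i, j).
  by rewrite /= mxE => /negbFE/eqP.
set T := (\sum_i l i j0 *: sq_mx (gamma i))%R.
have TE a b : T a b = \sum_i l i j0 * (gamma i 0 a * gamma i 0 b).
  by rewrite summxE; apply: eq_bigr => i _; rewrite !mxE.
have Tnz : T != 0.
  by apply/eqP => T0; move: nz; rewrite (Hsq (fun i => l i j0) T0 i0) eqxx.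
have cf_e a i : cf (delta_mx 0 a) i = gamma i 0 a.
  by rewrite /cf trmx_delta -colE mxE.
have cf_ee a b i : cf (delta_mx 0 a + delta_mx 0 b) i = gamma i 0 a + gamma i 0 b.
  by rewrite /cf linearD /= !trmx_delta mulmxDr -!colE !mxE.
suff [u Hu] : exists u, muf l u j0 != 0.
  exists u; apply: contra Hu => /eqP H.
  by have := congr1 (fun A : 'rV[K]_d2 => A 0 j0) H; rewrite !mxE => ->.
case: (pickP (fun a => T a a != 0)) => [a Ha | Hd].
  exists (delta_mx 0 a).
  rewrite (_ : muf l (delta_mx 0 a) j0 = T a a) // TE.
  by apply: eq_bigr => i _; rewrite cf_e expr2.
have [a [b Hab]] : exists a b, T a b != 0.
  case: (pickP (fun ab : 'I_d * 'I_d => T ab.1 ab.2 != 0)) => [[a b] /= H | H].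
    by exists a, b.
  move/eqP: Tnz; case; apply/matrixP => a b; have := H (a, b).
  by rewrite /= mxE => /negbFE/eqP.
exists (delta_mx 0 a + delta_mx 0 b).
have -> : muf l (delta_mx 0 a + delta_mx 0 b) j0 = T a a + T b b + T a b *+ 2.
  rewrite !TE -sumrMnl -!big_split; apply: eq_bigr => i _; rewrite cf_ee /=; ring.
have := Hd a; have := Hd b; rewrite /= => /negbFE/eqP -> /negbFE/eqP ->.
by rewrite !add0r -mulr_natr mulf_neq0 // two_nz.
Qed.

Lemma R_bound (Hsq : square_independent gamma) (Hrank : quad_map_rank_ge M r)
  (l : W) : l != 0 -> (#|Rset l| * p ^ r <= #|V|)%N.
Proof.
move=> /(exists_u Hsq) [u Hu].
have : (r <= \rank (Pm l u))%N.
  have := Hrank _ Hu; rewrite gram_eq /Pm.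
  by congr (_ <= \rank _)%N; apply: eq_bigr => j _; rewrite mxE.
exact: R_card.
Qed.


Lemma dotBl (l l' w : W) : dot (l - l') w = dot l w - dot l' w.
Proof.
rewrite /dot -sumrB; apply: eq_bigr => i _; rewrite -sumrB; apply: eq_bigr => j _.
by rewrite !mxE mulrBl.
Qed.

Lemma dotBr (l w w' : W) : dot l (w - w') = dot l w - dot l w'.
Proof.
rewrite /dot -sumrB; apply: eq_bigr => i _; rewrite -sumrB; apply: eq_bigr => j _.
by rewrite !mxE mulrBr.
Qed.

Lemma dot_delta i j (w : W) : dot (delta_mx i j) w = w i j.
Proof.
rewrite /dot (bigD1 i) //= (bigD1 j) //= !mxE !eqxx mul1r big1 ?addr0.
  rewrite big1 ?addr0 // => i' /negbTE ne; apply: big1 => j' _.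
  by rewrite mxE ne mul0r.
by move=> j' /negbTE ne; rewrite mxE ne andbF mul0r.
Qed.

Lemma BfBl y y' h : Bf (y - y') h = Bf y h - Bf y' h.
Proof.
have subE k1 k2 (A B : 'M[K]_(k1, k2)) a b : (A - B) a b = A a b - B a b.
  by rewrite !mxE.
by apply/matrixP => i j; rewrite subE !BfE mulmxBr !mulmxBl subE.
Qed.

Lemma card_sum (T : finType) (P : pred T) : #|[set x | P x]| = (\sum_(x : T) (P x : nat))%N.
Proof.
rewrite -sum1_card big_mkcond /=; apply: eq_bigr => x _; rewrite inE.
by case: (P x).
Qed.

Lemma count_l (w : W) :
  (p * \sum_(l : W) (dot l w == 0%R : nat) = #|W| + (p - 1) * #|W| * (w == 0%R : nat))%N.
Proof.
rewrite -(card_sum W (fun l => dot l w == 0)).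
have p1 := prime_gt0 Hp.
case: (eqVneq w 0) => [-> | nz] /=.
  rewrite (_ : [set l | dot l 0 == 0] = setT) ?cardsT.
    by rewrite muln1 -{2}(mul1n #|W|) -mulnDl subnKC.
  apply/setP => l; rewrite !inE.
  by rewrite -(subrr (0 : W)) dotBr subrr.
rewrite muln0 addn0 mulnC.
have [i [j nzij]] : exists i j, w i j != 0.
  case: (pickP (fun ij : 'I_m * 'I_d2 => w ij.1 ij.2 != 0)) => [[i j] /= H | H].
    by exists i, j.
  move/eqP: nz; case; apply/matrixP => i j; have := H (i, j).
  by rewrite /= mxE => /negbFE/eqP.
apply: (functional_ker _ Hp _ (fun l => dot l w) _ (delta_mx i j)).
  by move=> x y; rewrite dotBl.
by rewrite dot_delta.
Qed.


Definition Zs (l : W) : nat :=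
  (\sum_(x : V) \sum_(y : V) (dot l (Fm x - Fm y) == 0%R : nat))%N.

Lemma Z_shift l :
  Zs l = (\sum_(h : V) \sum_(y : V) (dot l (Fm (y + h) - Fm y) == 0%R : nat))%N.
Proof.
rewrite /Zs exchange_big /= [RHS]exchange_big /=; apply: eq_bigr => y _.
by rewrite (reindex_inj (addrI y)).
Qed.

Lemma count_h l h :
  (p * \sum_(y : V) (dot l (Fm (y + h) - Fm y) == 0%R : nat)
     <= #|V| + (h \in Rset l) * (p - 1) * #|V|)%N.
Proof.
have p1 := prime_gt0 Hp.
rewrite -(card_sum V (fun y => dot l (Fm (y + h) - Fm y) == 0%R)).
case: (boolP (h \in Rset l)) => hR.
  rewrite mul1n -{1}(mul1n #|V|) -mulnDl subnKC //.
  by apply: leq_mul => //; apply: max_card.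
rewrite mul0n addn0.
move: hR; rewrite inE => /forallPn [y0 Hy0].
pose g := fun y => dot l (Bf y h) *+ 2.
have gB : forall y y', g (y - y') = g y - g y'.
  by move=> y y'; rewrite /g BfBl dotBr mulrnBl.
have -> : [set y | dot l (Fm (y + h) - Fm y) == 0%R] = [set y | g y == - dot l (Fm h)].
  apply/setP => y; rewrite !inE Fm_shift.
  rewrite (fBD _ _ _ (dotBr l)) (fBMn _ _ _ (dotBr l)) addrC addr_eq0.
  by [].
have gy0 : g y0 != 0 by rewrite /g -mulr_natr mulf_neq0 // two_nz.
rewrite -(functional_ker _ Hp _ g gB y0 gy0) mulnC leq_mul2r.
by rewrite (fiber_le _ _ _ gB) orbT.
Qed.

Lemma Z_bound l :
  (p * Zs l <= #|V| * #|V| + #|Rset l| * (p - 1) * #|V|)%N.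
Proof.
rewrite Z_shift big_distrr /=.
apply: leq_trans.
  by apply: leq_sum => h _; exact: (count_h l h).
rewrite big_split /= sum_nat_const.
have E : (\sum_i ((i \in Rset l) : nat) = #|Rset l|)%N.
  by rewrite -sum1_card [RHS]big_mkcond; apply: eq_bigr => i _; case: (i \in _).
by rewrite -!big_distrl /= E.
Qed.


Definition Ss : nat := (\sum_(x : V) \sum_(y : V) (Fm x == Fm y : nat))%N.

Lemma C_eq : ((p - 1) * #|W| * Ss + #|W| * (#|V| * #|V|) = p * \sum_(l : W) Zs l)%N.
Proof.
have H : (p * \sum_l Zs l =
   \sum_(x : V) \sum_(y : V) (p * \sum_(l : W) (dot l (Fm x - Fm y) == 0%R : nat)))%N.
  rewrite /Zs exchange_big big_distrr /=; apply: eq_bigr => x _.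
  by rewrite exchange_big big_distrr.
have E2 : (#|W| * (#|V| * #|V|) = \sum_(x : V) \sum_(y : V) #|W|)%N.
  rewrite (eq_bigr (fun _ => #|V| * #|W|)%N); last by move=> x _; rewrite sum_nat_const.
  by rewrite sum_nat_const mulnC mulnA.
rewrite H E2 /Ss big_distrr /= -big_split /=; apply: eq_bigr => x _.
rewrite big_distrr /= -big_split /=; apply: eq_bigr => y _.
by rewrite count_l subr_eq0 addnC.
Qed.


Definition Nc (c : W) : nat := (\sum_(x : V) (Fm x == c : nat))%N.

Lemma sum_eq1 (x : W) : (\sum_(c : W) (x == c : nat))%N = 1%N.
Proof.
rewrite (bigD1 x) //= eqxx big1 // => c /negbTE ne; by rewrite eq_sym ne.
Qed.

Lemma sumNc : (\sum_(c : W) Nc c)%N = #|V|.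
Proof.
rewrite /Nc exchange_big /= (eq_bigr (fun _ => 1%N)); last by move=> x _; rewrite sum_eq1.
by rewrite sum1_card.
Qed.

Lemma sumNc2 : (\sum_(c : W) Nc c * Nc c)%N = Ss.
Proof.
rewrite /Nc /Ss.
under eq_bigr do rewrite big_distrl /=.
rewrite exchange_big /=; apply: eq_bigr => x _.
under eq_bigr do rewrite big_distrr /=.
rewrite exchange_big /=; apply: eq_bigr => y _.
case: (eqVneq (Fm x) (Fm y)) => [<- | ne].
  by rewrite /= -(sum_eq1 (Fm x)); apply: eq_bigr => c _; case: (Fm x == c).
rewrite /=; apply: big1 => c _; case: (eqVneq (Fm x) c) => // <-; by rewrite eq_sym (negbTE ne).
Qed.


Lemma Z0 : Zs 0 = (#|V| * #|V|)%N.
Proof.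
rewrite /Zs (eq_bigr (fun _ => #|V|)) ?sum_nat_const // => x _.
rewrite (eq_bigr (fun _ => 1%N)) ?sum_nat_const ?muln1 // => y _.
have -> : dot 0 (Fm x - Fm y) = 0 by rewrite -(subrr (0 : W)) dotBl subrr.
by rewrite eqxx.
Qed.

Lemma S_bound (Hsq : square_independent gamma) (Hrank : quad_map_rank_ge M r) :
  (p ^ r * #|W| * Ss + #|V| * #|V| <= p ^ r * (#|V| * #|V|) + #|W| * (#|V| * #|V|))%N.
Proof.
have p1 := prime_gt1 Hp.
set P := (p ^ r)%N; set v2 := (#|V| * #|V|)%N; set w := #|W|.
set Kc := (P * v2 + (p - 1) * v2)%N.
have Hl : forall l : W, l != 0 -> (P * (p * Zs l) <= Kc)%N.
  move=> l nz; have h1 := Z_bound l; have h2 := R_bound Hsq Hrank l nz.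
  apply: leq_trans (leq_mul (leqnn P) h1) _.
  have h3 := leq_mul h2 (leqnn ((p - 1) * #|V|)).
  rewrite /Kc /v2 /P in h3 *; nia.
have HA : (\sum_(l : W) P * (p * Zs l) + Kc <= P * (p * v2) + w * Kc)%N.
  rewrite (bigD1 0) //= Z0 -/v2 -addnA leq_add2l.
  have -> : (w * Kc = \sum_(l : W) Kc)%N by rewrite sum_nat_const.
  rewrite [X in (_ <= X)%N](bigD1 0) //= [X in (_ <= X)%N]addnC leq_add2r.
  by apply: leq_sum => l nz; apply: Hl.
have HC := C_eq; rewrite -/w -/v2 in HC.
rewrite -!big_distrr /= -HC in HA.
have hp : (0 < p - 1)%N by rewrite subn_gt0.
rewrite -(leq_pmul2l hp).
move: HA; rewrite /Kc; nia.
Qed.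


Lemma final (R : rcfType) (Hsq : square_independent gamma)
  (Hrank : quad_map_rank_ge M r) (b : 'I_m -> 'rV[K]_d2) :
  let prob : R :=
    (#|[set x : V |
        [forall i : 'I_m,
           quad_map M (lin_form_eval (gamma i) x) == phi i x + b i]]|%:R)
    / (#|{: V}|%:R) in
  `| prob - (p%:R) ^- (m * d2) | <= (Num.sqrt (p%:R)) ^- r.
Proof.
cbv zeta.
pose B : W := \matrix_(i, j) b i 0 j.
have Hev : #|[set x : V | [forall i : 'I_m,
           quad_map M (lin_form_eval (gamma i) x) == phi i x + b i]]| = Nc B.
  rewrite /Nc -(card_sum V (fun x => Fm x == B)); congr #|pred_of_set _|.
  apply/setP => x; rewrite !inE.
  apply/forallP/eqP => [H | H i].
    apply/matrixP => i j; have := congr1 (fun v : 'rV[K]_d2 => v 0 j) (eqP (H i)).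
    by rewrite /Fm !mxE => ->; rewrite addrAC subrr add0r.
  apply/eqP; apply/matrixP => a j; rewrite (ord1 a).
  have := congr1 (fun A : W => A i j) H; rewrite /Fm !mxE => /eqP.
  by rewrite subr_eq addrC => /eqP ->.
have p0 : (0 < p)%N := prime_gt0 Hp.
have cV : #|{: V}| = (p ^ (d * n))%N by rewrite card_mx card_Fp.
have cW : #|{: W}| = (p ^ (m * d2))%N by rewrite card_mx card_Fp.
set v : R := (#|{: V}|)%:R.
set w : R := (#|{: W}|)%:R.
set P : R := (p%:R) ^+ r.
set N : W -> R := fun c => (Nc c)%:R.
set s : R := Ss%:R.
have pR : (0 : R) < p%:R by rewrite ltr0n.
have vpos : 0 < v by rewrite /v cV natrX exprn_gt0.
have wpos : 0 < w by rewrite /w cW natrX exprn_gt0.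
have Ppos : 0 < P by rewrite /P exprn_gt0.
have hw : (p%:R : R) ^- (m * d2) = w^-1 by rewrite /w cW natrX.
have h1 : \sum_(c : W) N c = v by rewrite /N -natr_sum sumNc.
have h2 : \sum_(c : W) N c ^+ 2 = s.
  by rewrite /s -sumNc2 natr_sum; apply: eq_bigr => c _; rewrite /N natrM expr2.
have h3 : P * w * s + v * v <= P * (v * v) + w * (v * v).
  have := S_bound Hsq Hrank; rewrite -(ler_nat R) !natrD !natrM natrX.
  by [].
have E : \sum_(c : W) (w * N c - v) ^+ 2 = w ^+ 2 * s - w * (v * v).
  rewrite (eq_bigr (fun c => w ^+ 2 * N c ^+ 2 - (2%:R * w * v) * N c + v * v));
    last by move=> c _; ring.
  rewrite big_split sumrB /= -!mulr_sumr h1 h2 sumr_const -/w.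
  rewrite -mulr_natr -/w; ring.
have hB : (w * N B - v) ^+ 2 <= w ^+ 2 * s - w * (v * v).
  rewrite -E (bigD1 B) //= lerDl; apply: sumr_ge0 => c _; exact: sqr_ge0.
have hK : P * (w * N B - v) ^+ 2 <= (w * v) ^+ 2.
  by nra.
rewrite Hev hw.
change ((Nc B)%:R : R) with (N B).
set a := N B / v - w^-1.
have ha : a = (w * N B - v) / (w * v).
  rewrite /a; field; apply/andP; split; exact: lt0r_neq0.
set q := Num.sqrt (p%:R : R) ^- r.
have hq0 : 0 <= q by rewrite /q invr_ge0 exprn_ge0 // sqrtr_ge0.
have hq2 : q ^+ 2 * P = 1.
  rewrite /q -exprVn -exprM mulnC exprM exprVn sqr_sqrtr ?ler0n // exprVn /P.
  by rewrite mulVf // expf_neq0 // lt0r_neq0.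
have haP : a ^+ 2 * P <= 1.
  rewrite ha expr_div_n mulrAC ler_pdivrMr ?mul1r; first by rewrite mulrC.
  by rewrite exprn_gt0 // mulr_gt0.
have haq : a ^+ 2 <= q ^+ 2 by rewrite -(ler_pM2r Ppos) hq2.
rewrite ler_norml; apply/andP; split; nra.
Qed.

End Main.

Theorem lemma3p6 (R : rcfType) (p : nat) (Hp : prime p) (Hodd : odd p)
  (m d n d2 r : nat)
  (gamma : 'I_m -> 'rV['F_p]_d)
  (Hsq : square_independent gamma)
  (M : 'I_d2 -> 'M['F_p]_n)
  (Hsym : forall j, (M j)^T = M j)
  (Hrank : quad_map_rank_ge M r)
  (phi : 'I_m -> 'M['F_p]_(d, n) -> 'rV['F_p]_d2)
  (Hphi : forall i, linear (phi i))
  (b : 'I_m -> 'rV['F_p]_d2) :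
  let prob : R :=
    (#|[set x : 'M['F_p]_(d, n) |
        [forall i : 'I_m,
           quad_map M (lin_form_eval (gamma i) x) == phi i x + b i]]|%:R)
    / (#|{: 'M['F_p]_(d, n)}|%:R) in
  `| prob - (p%:R) ^- (m * d2) | <= (Num.sqrt (p%:R)) ^- r.
Proof.
have H := (final p Hp Hodd m d n d2 r gamma M Hsym phi Hphi R Hsq Hrank b).
exact H.
Qed.
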